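(* There exists a family of finite sets $u^{\alpha}_n\subseteq\omega_1$, indexed by $\alpha<\omega_1$ and positive integers $n$, such that for all $\alpha<\omega_1$ and all $n\geq 1$: (i) $|u^{\alpha}_n|<n+1$; (ii) $\alpha\in u^{\alpha}_n\subseteq u^{\alpha}_{n+1}$; (iii) $\bigcup_n u^{\alpha}_n=\alpha+1$ (i.e. $=\{\beta:\beta\le\alpha\}$); (iv) if $\beta\in u^{\alpha}_n$ then $u^{\beta}_n=u^{\alpha}_n\cap(\beta+1)$; (v) $\lim_{n\to\infty}\frac{|u^{\alpha}_n|}{n+1}=0$.
   Context: $\omega_1$ is the first uncountable ordinal; ordinals are identified with the set of smaller ordinals, so $\beta+1=\{\gamma:\gamma\le\beta\}$. *)

(* Defs.v *)
From Stdlib Require Import Reals List.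
Import ListNotations.

(* (T, lt) is (order-isomorphic to) the first uncountable ordinal omega_1:
   a strict well-order that is uncountable, all of whose proper initial
   segments {b | b < a} are countable. Such a structure is unique up to
   order isomorphism, so quantifying over all of them is the same as
   speaking about omega_1 itself. *)
Definition is_omega1 (T : Type) (lt : T -> T -> Prop) : Prop :=
  (forall x, ~ lt x x) /\
  (forall x y z, lt x y -> lt y z -> lt x z) /\
  (forall x y, lt x y \/ x = y \/ lt y x) /\
  well_founded lt /\
  (~ exists f : T -> nat, forall x y, f x = f y -> x = y) /\
  (forall a : T, exists f : T -> nat,
      forall x y, lt x a -> lt y a -> f x = f y -> x = y).

(* Finite subsets of T are represented by duplicate-free lists;
   the cardinality of the set is the length of the list. *)

(* Main.v *)
Require Import Defs.
From Stdlib Require Import Reals List Lia Lra Arith.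
From Stdlib Require Import ClassicalEpsilon FunctionalExtensionality Classical.
Import ListNotations.

Lemma ratio_bound (L n c : nat) : (0 < c)%nat ->
  (Rabs (INR L / INR (n+1) - 0) < / INR c)%R -> (L * c < n + 1)%nat.
Proof.
  intros Hc H.
  assert (Hn : (0 < INR (n+1))%R) by (apply lt_0_INR; lia).
  assert (Hc' : (0 < INR c)%R) by (apply lt_0_INR; lia).
  assert (HL : (0 <= INR L)%R) by apply pos_INR.
  rewrite Rminus_0_r in H.
  rewrite Rabs_pos_eq in H by (apply Rmult_le_pos; [lra| left; apply Rinv_0_lt_compat; lra]).
  apply INR_lt. rewrite mult_INR.
  set (q := (INR L / INR (n+1))%R) in *.
  assert (E : INR L = (q * INR (n+1))%R) by (unfold q; field; lra).
  assert (Hq : (q * INR c < 1)%R).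
  { apply Rmult_lt_compat_r with (r := INR c) in H; [|lra].
    rewrite Rinv_l in H; lra. }
  rewrite E. nra.
Qed.

Lemma ratio_small (len n J : nat) : (len * S J <= n + 1)%nat ->
  (INR len / INR (n+1) <= / INR (S J))%R.
Proof.
  intros H.
  assert (Hn : (0 < INR (n+1))%R) by (apply lt_0_INR; lia).
  assert (HJ : (0 < INR (S J))%R) by (apply lt_0_INR; lia).
  apply le_INR in H. rewrite mult_INR in H.
  unfold Rdiv. apply Rmult_le_reg_r with (r := INR (n+1)); [lra|].
  rewrite Rmult_assoc, Rinv_l by lra.
  apply Rmult_le_reg_r with (r := INR (S J)); [lra|].
  replace (/ INR (S J) * INR (n + 1) * INR (S J))%R with (INR (n+1)) by (field; lra).
  lra.
Qed.

Lemma cv_bound (f : nat -> nat) :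
  (forall J, exists n0, forall n, (n0 <= n)%nat -> (f n * S J <= n + 1)%nat) ->
  Un_cv (fun n => (INR (f n) / INR (n + 1))%R) 0%R.
Proof.
  intros H eps Heps.
  destruct (archimed_cor1 eps Heps) as [J [HJ HJ0]].
  destruct (H J) as [n0 Hn0]. exists n0. intros n Hn.
  unfold R_dist. rewrite Rminus_0_r.
  assert (Hn1 : (0 < INR (n+1))%R) by (apply lt_0_INR; lia).
  rewrite Rabs_pos_eq by (apply Rmult_le_pos; [apply pos_INR| left; apply Rinv_0_lt_compat; lra]).
  eapply Rle_lt_trans. apply ratio_small. apply Hn0; lia.
  eapply Rle_lt_trans; [|exact HJ].
  apply Rinv_le_contravar. apply lt_0_INR; lia. apply le_INR; lia.
Qed.

Definition good {T} (lt : T -> T -> Prop) (u : T -> nat -> list T) (a : T) : Prop :=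
      (forall n, (1 <= n)%nat -> NoDup (u a n)) /\
      (forall n, (1 <= n)%nat -> (length (u a n) < n + 1)%nat) /\
      (forall n, (1 <= n)%nat ->
         In a (u a n) /\ (forall x, In x (u a n) -> In x (u a (S n)))) /\
      (forall b, (lt b a \/ b = a) <->
                 exists n, (1 <= n)%nat /\ In b (u a n)) /\
      (forall n b, (1 <= n)%nat -> In b (u a n) ->
         forall x, In x (u b n) <-> (In x (u a n) /\ (lt x b \/ x = b))) /\
      Un_cv (fun n => (INR (length (u a n)) / INR (n + 1))%R) 0%R.

Definition Spec {T} (lt : T -> T -> Prop) (g : T -> nat -> list T) (a : T)
  (s : nat -> T) (K : nat -> nat) : Prop :=
  (forall k, lt (s k) a) /\
  (forall b, lt b a -> exists n j, (1 <= n)%nat /\ K n = S j /\ In b (g (s j) n)) /\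
  (forall n, K (S n) = K n \/ K (S n) = S (K n)) /\
  (forall n j, K n = S j -> K (S n) = S (S j) -> In (s j) (g (s (S j)) (S n))) /\
  (forall n j, K n = S j -> ((length (g (s j) n) + 1) * (j+2) <= n+1)%nat) /\
  (forall j, exists n, (j <= K n)%nat).

Definition G {T} (lt : T -> T -> Prop) (g : T -> nat -> list T) (a : T) : nat -> list T :=
  match excluded_middle_informative
          (exists p : (nat -> T) * (nat -> nat), Spec lt g a (fst p) (snd p)) with
  | left H => let p := proj1_sig (constructive_indefinite_description _ H) in
      fun n => match snd p n with 0 => [a] | S j => a :: g (fst p j) n end
  | right _ => fun n => [a]
  end.

Lemma G_spec {T} lt g (a : T) :
  (exists p : (nat -> T) * (nat -> nat), Spec lt g a (fst p) (snd p)) ->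
  exists s K, Spec lt g a s K /\
    forall n, G lt g a n = match K n with 0 => [a] | S j => a :: g (s j) n end.
Proof.
  intros H. unfold G. destruct (excluded_middle_informative _) as [H'|H']; [|contradiction].
  destruct (constructive_indefinite_description _ H') as [p Hp]; simpl.
  exists (fst p), (snd p); auto.
Qed.

Lemma G_nospec {T} lt g (a : T) :
  ~ (exists p : (nat -> T) * (nat -> nat), Spec lt g a (fst p) (snd p)) ->
  forall n, G lt g a n = [a].
Proof.
  intros H n. unfold G. destruct (excluded_middle_informative _) as [H'|H']; [contradiction|auto].
Qed.

Definition glue {T} (lt : T -> T -> Prop) (a : T) (h : forall b, lt b a -> nat -> list T) : T -> nat -> list T :=
  fun b => match excluded_middle_informative (lt b a) with left p => h b p | right _ => fun _ => [] end.

Definition U {T} (lt : T -> T -> Prop) (wf : well_founded lt) : T -> nat -> list T :=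
  Fix wf (fun _ => nat -> list T) (fun a h => G lt (glue lt a h) a).

Lemma U_eq {T} lt (wf : well_founded lt) (a : T) :
  U lt wf a = G lt (glue lt a (fun b _ => U lt wf b)) a.
Proof.
  unfold U. rewrite Fix_eq. reflexivity.
  intros x f g H. f_equal. unfold glue. apply functional_extensionality. intro b.
  destruct (excluded_middle_informative (lt b x)); auto.
Qed.

Lemma glue_lt {T} lt (a : T) (u : T -> nat -> list T) b : lt b a ->
  glue lt a (fun b _ => u b) b = u b.
Proof. intros H. unfold glue. destruct (excluded_middle_informative (lt b a)); tauto. Qed.

Lemma good_mono {T} lt u (b : T) : good lt u b -> forall m d x, (1 <= m)%nat ->
  In x (u b m) -> In x (u b (m + d)).
Proof.
  intros Hg m d x Hm Hx. induction d. rewrite Nat.add_0_r; auto.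
  rewrite Nat.add_succ_r. apply (proj2 (proj1 (proj2 (proj2 Hg)) (m+d) ltac:(lia))); auto.
Qed.

Lemma good_le {T} lt u (b : T) : good lt u b -> forall n x, (1 <= n)%nat ->
  In x (u b n) -> lt x b \/ x = b.
Proof.
  intros Hg n x Hn Hx. apply (proj1 (proj2 (proj2 (proj2 Hg)))). eauto.
Qed.

Lemma step_spec {T} (lt : T -> T -> Prop) (irr : forall x, ~ lt x x)
  (tr : forall x y z, lt x y -> lt y z -> lt x z) (u g : T -> nat -> list T) a s K
  (Hg : forall b, lt b a -> g b = u b) (IH : forall b, lt b a -> good lt u b)
  (HS : Spec lt g a s K)
  (Hu : forall n, u a n = match K n with 0 => [a] | S j => a :: u (s j) n end) :
  good lt u a.
Proof.
  destruct HS as [C1 [C3 [C4 [C5 [C6 C7]]]]].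
  assert (C3' : forall b, lt b a -> exists n j, (1 <= n)%nat /\ K n = S j /\ In b (u (s j) n)).
  { intros b hb; destruct (C3 b hb) as (n&j&?&?&?); exists n, j; rewrite <- Hg; auto. }
  assert (C5' : forall n j, K n = S j -> K (S n) = S (S j) -> In (s j) (u (s (S j)) (S n))).
  { intros n j H1 H2; rewrite <- Hg; auto. }
  assert (C6' : forall n j, K n = S j -> ((length (u (s j) n) + 1) * (j+2) <= n+1)%nat).
  { intros n j H1; rewrite <- Hg; auto. }
  clear C3 C5 C6.
  assert (Kpos : forall n j, K n = S j -> (1 <= n)%nat).
  { intros n j H. specialize (C6' n j H). nia. }
  assert (Kmono : forall n d, (K n <= K (n + d))%nat).
  { intros n d; induction d. rewrite Nat.add_0_r; lia.
    rewrite Nat.add_succ_r. destruct (C4 (n+d)); lia. }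
  assert (Hel : forall n j x, (1 <= n)%nat -> In x (u (s j) n) -> lt x a).
  { intros n j x Hn Hx. destruct (good_le lt u (s j) (IH _ (C1 j)) n x Hn Hx) as [H|H].
    eapply tr; eauto. subst; auto. }
  assert (Hle : forall n x, (1 <= n)%nat -> In x (u a n) -> lt x a \/ x = a).
  { intros n x Hn Hx. rewrite Hu in Hx. destruct (K n) eqn:E; simpl in Hx.
    destruct Hx as [<-|[]]; auto.
    destruct Hx as [<-|Hx]; auto. left; eapply Hel; eauto. }
  split; [|split; [|split; [|split; [|split]]]].
  - intros n Hn. rewrite Hu. destruct (K n) eqn:E.
    constructor; [simpl; auto| constructor].
    constructor. intro Hin; apply (irr a); eapply Hel; eauto.
    apply (proj1 (IH _ (C1 n0))); auto.
  - intros n Hn. rewrite Hu. destruct (K n) eqn:E; simpl; [lia|].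
    specialize (C6' n n0 E). nia.
  - intros n Hn. split.
    + rewrite Hu. destruct (K n); simpl; auto.
    + intros x Hx. rewrite Hu in *. destruct (C4 n) as [E|E]; rewrite E;
        destruct (K n) eqn:EK; simpl in *.
      * auto.
      * destruct Hx as [->|Hx]; [left; auto|right].
        apply (proj2 (proj1 (proj2 (proj2 (IH _ (C1 n0)))) n Hn)); auto.
      * destruct Hx as [->|[]]; left; auto.
      * destruct Hx as [->|Hx]; [left; auto|right].
        assert (Hx' : In x (u (s n0) (S n))).
        { apply (proj2 (proj1 (proj2 (proj2 (IH _ (C1 n0)))) n Hn)); auto. }
        pose proof (C5' n n0 EK E) as H5.
        pose proof (proj1 (proj2 (proj2 (proj2 (proj2 (IH _ (C1 (S n0)))))))) as Hiv.
        apply (proj1 (Hiv (S n) (s n0) ltac:(lia) H5 x) Hx').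
  - intros b. split.
    + intros [Hb| ->].
      * destruct (C3' b Hb) as (n&j&Hn&E&Hin). exists n; split; auto.
        rewrite Hu, E. right; auto.
      * exists 1%nat; split; auto. rewrite Hu. destruct (K 1); left; auto.
    + intros (n & Hn & Hin). apply (Hle n); auto.
  - intros n b Hn Hb x. pose proof Hb as Hb0. rewrite Hu in Hb. destruct (K n) eqn:EK.
    + destruct Hb as [Hab|[]]. subst b. split.
      * intro Hx; split; auto. apply (Hle n); auto.
      * intros [? _]; auto.
    + destruct Hb as [Hab|Hb]; [subst b|].
      * split. intro Hx; split; auto. apply (Hle n); auto. intros [? _]; auto.
      * pose proof (proj1 (proj2 (proj2 (proj2 (proj2 (IH _ (C1 n0))))))) as Hiv.
        pose proof (Hiv n b Hn Hb x) as IHiv.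
        rewrite Hu, EK; simpl. split.
        -- intro Hx. apply IHiv in Hx. destruct Hx as [Hx Hxb]; split; auto.
        -- intros [[Hxa|Hx] Hxb]; [subst x|].
           ++ exfalso. pose proof (Hel n n0 b Hn Hb) as Hba.
              destruct Hxb as [Hab| Hab]; [apply (irr a); eauto| subst b; apply (irr a); auto].
           ++ apply IHiv; auto.
  - apply cv_bound with (f := fun n => length (u a n)).
    intros J. destruct (C7 (S J)) as [n0 Hn0]. exists n0. intros n Hn.
    pose proof (Kmono n0 (n - n0)%nat) as Hm. replace (n0 + (n - n0))%nat with n in Hm by lia.
    rewrite Hu. destruct (K n) as [|j] eqn:E; [lia|]. simpl.
    specialize (C6' n j E). nia.
Qed.

Lemma step_nospec {T} (lt : T -> T -> Prop) (irr : forall x, ~ lt x x) (u : T -> nat -> list T) a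
  (Hno : forall b, ~ lt b a) (Hu : forall n, u a n = [a]) : good lt u a.
Proof.
  split; [|split; [|split; [|split; [|split]]]].
  - intros n _. rewrite Hu. constructor; [simpl; auto|constructor].
  - intros n Hn. rewrite Hu. simpl; lia.
  - intros n _. rewrite !Hu. split; simpl; auto.
  - intros b; split.
    + intros [Hb| ->]; [exfalso; eapply Hno; eauto|]. exists 1%nat; rewrite Hu; simpl; auto.
    + intros (n & _ & Hin). rewrite Hu in Hin. destruct Hin as [<-|[]]; auto.
  - intros n b _ Hb x. rewrite Hu in Hb. destruct Hb as [Hb|[]]. subst b.
    rewrite Hu. simpl. split; [intros [<-|[]]; auto| intros [[<-|[]] _]; auto].
  - apply cv_bound with (f := fun n => length (u a n)). intros J; exists J. intros n Hn.
    rewrite Hu; simpl; lia.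
Qed.

Fixpoint smax {T} (lt : T -> T -> Prop) (e : nat -> T) (k : nat) : T :=
  match k with
  | 0 => e 0
  | S k => let p := smax lt e k in
           if excluded_middle_informative (lt p (e (S k))) then e (S k) else p
  end.

Lemma smax_lt {T} lt (e : nat -> T) a : (forall m, lt (e m) a) -> forall k, lt (smax lt e k) a.
Proof.
  intros H k; induction k; simpl; auto.
  destruct (excluded_middle_informative _); auto.
Qed.

Lemma smax_in {T} lt (e : nat -> T) : forall k, exists i, (i <= k)%nat /\ smax lt e k = e i.
Proof.
  induction k; simpl. exists 0%nat; auto.
  destruct (excluded_middle_informative _). exists (S k); auto.
  destruct IHk as [i [? ?]]; exists i; split; auto.
Qed.

Lemma smax_ge {T} (lt : T -> T -> Prop) (tr : forall x y z, lt x y -> lt y z -> lt x z)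
  (tri : forall x y, lt x y \/ x = y \/ lt y x) (e : nat -> T) :
  forall k i, (i <= k)%nat -> lt (e i) (smax lt e k) \/ e i = smax lt e k.
Proof.
  induction k; intros i Hi.
  - assert (i = 0)%nat by lia; subst; simpl; right; reflexivity.
  - simpl. destruct (excluded_middle_informative _) as [Hl|Hl].
    + destruct (Nat.eq_dec i (S k)) as [->|Hne]; [right; reflexivity|].
      destruct (IHk i ltac:(lia)) as [H|H]; left; [eauto| rewrite H; auto].
    + destruct (Nat.eq_dec i (S k)) as [->|Hne]; [|apply IHk; lia].
      destruct (tri (smax lt e k) (e (S k))) as [H|[H|H]]; [contradiction|right; symmetry; exact H|left; exact H].
Qed.

Fixpoint Nf (M : nat -> nat) (j : nat) : nat :=
  match j with 0 => M 0 | S j => Nat.max (S (Nf M j)) (M (S j)) end.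

Lemma Nf_ge M j : (M j <= Nf M j)%nat.
Proof. destruct j; [simpl; lia | cbn [Nf]; apply Nat.le_max_r]. Qed.

Fixpoint Kf (N : nat -> nat) (n : nat) : nat :=
  match n with
  | 0 => 0
  | S n => if N (Kf N n) <=? S n then S (Kf N n) else Kf N n
  end.

Lemma Kf_step N n : Kf N (S n) = Kf N n \/ Kf N (S n) = S (Kf N n).
Proof. simpl. destruct (N (Kf N n) <=? S n); auto. Qed.

Lemma Kf_inv N : forall n j, Kf N n = S j -> (N j <= n)%nat.
Proof.
  induction n; intros j H; simpl in H; [discriminate|].
  destruct (N (Kf N n) <=? S n) eqn:E.
  - apply Nat.leb_le in E. injection H as H. subst; auto.
  - specialize (IHn j H); lia.
Qed.

Lemma Kf_inc N n j : Kf N (S n) = S (S j) -> Kf N n = S j -> (N (S j) <= S n)%nat.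
Proof.
  intros H1 H2. simpl in H1. destruct (N (Kf N n) <=? S n) eqn:E.
  - apply Nat.leb_le in E. rewrite H2 in E; auto.
  - rewrite H2 in H1. discriminate H1 || (injection H1; lia).
Qed.

Lemma Kf_mono N n d : (Kf N n <= Kf N (n + d))%nat.
Proof.
  induction d. rewrite Nat.add_0_r; lia.
  rewrite Nat.add_succ_r. destruct (Kf_step N (n+d)); lia.
Qed.

Lemma Kf_unb N : forall j, exists n, (j <= Kf N n)%nat.
Proof.
  induction j. exists 0%nat; lia.
  destruct IHj as [n Hn].
  pose proof (Kf_mono N n (N j)) as Hm.
  destruct (Nat.eq_dec (Kf N (n + N j)) j) as [E|E].
  - exists (S (n + N j)). simpl. rewrite E.
    destruct (N j <=? S (n + N j)) eqn:E2; [lia|].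
    apply Nat.leb_gt in E2; lia.
  - exists (n + N j)%nat; lia.
Qed.

Lemma exist_spec {T} (lt : T -> T -> Prop) (irr : forall x, ~ lt x x)
  (tr : forall x y z, lt x y -> lt y z -> lt x z)
  (tri : forall x y, lt x y \/ x = y \/ lt y x) (u g : T -> nat -> list T) a b0
  (cnt : exists f : T -> nat, forall x y, lt x a -> lt y a -> f x = f y -> x = y)
  (Hb0 : lt b0 a) (Hg : forall b, lt b a -> g b = u b) (IH : forall b, lt b a -> good lt u b) :
  exists p : (nat -> T) * (nat -> nat), Spec lt g a (fst p) (snd p).
Proof.
  destruct cnt as [f Hf].
  set (P := fun m b => lt b a /\ (f b = m \/ ~ exists b', lt b' a /\ f b' = m)).
  assert (HP : forall m, exists b, P m b).
  { intros m. destruct (classic (exists b', lt b' a /\ f b' = m)) as [[b' [H1 H2]]|Hn].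
    exists b'; split; auto. exists b0; split; auto. }
  assert (He : exists e : nat -> T, forall m, P m (e m)).
  { exists (fun m => proj1_sig (constructive_indefinite_description _ (HP m))).
    intro m; exact (proj2_sig (constructive_indefinite_description _ (HP m))). }
  destruct He as [e He].
  assert (He_lt : forall m, lt (e m) a) by (intro m; apply (He m)).
  assert (He_f : forall b, lt b a -> e (f b) = b).
  { intros b Hb. destruct (He (f b)) as [H1 [H2|H2]].
    apply Hf; auto. exfalso; apply H2; exists b; auto. }
  set (s := smax lt e).
  assert (Hs_lt : forall k, lt (s k) a) by (apply smax_lt; auto).
  assert (HM : forall j, exists M, (1 <= M)%nat /\ forall m, (M <= m)%nat ->
             ((length (u (s j) m) + 1) * (j+2) <= m+1)%nat /\
             forall i, (i <= j)%nat -> In (e i) (u (s j) m)).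
  { intros j. pose proof (IH _ (Hs_lt j)) as Gd.
    assert (HA : exists N1, forall m, (N1 <= m)%nat ->
               (length (u (s j) m) * (2 * (j+2)) < m + 1)%nat).
    { destruct (proj2 (proj2 (proj2 (proj2 (proj2 Gd)))) (/ INR (2 * (j+2)))%R) as [N1 HN1].
      { apply Rinv_0_lt_compat, lt_0_INR; lia. }
      exists N1. intros m Hm. apply ratio_bound; [lia|]. apply (HN1 m); lia. }
    assert (Hsub : forall i, (i <= j)%nat -> exists Mi, forall m, (Mi <= m)%nat -> In (e i) (u (s j) m)).
    { intros i Hi. destruct (smax_ge lt tr tri e j i Hi) as [H|H].
      - destruct (proj1 (proj1 (proj2 (proj2 (proj2 Gd))) (e i)) (or_introl H)) as [mi [Hmi Hin]].
        exists mi. intros m Hm. replace m with (mi + (m - mi))%nat by lia.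
        apply good_mono with (lt := lt); auto.
      - destruct (proj1 (proj1 (proj2 (proj2 (proj2 Gd))) (e i)) (or_intror H)) as [mi [Hmi Hin]].
        exists mi. intros m Hm. replace m with (mi + (m - mi))%nat by lia.
        apply good_mono with (lt := lt); auto. }
    assert (HB : forall J, exists MB, forall i, (i <= J)%nat -> (i <= j)%nat ->
                   forall m, (MB <= m)%nat -> In (e i) (u (s j) m)).
    { induction J.
      - destruct (le_dec 0 j) as [h|h]; [|lia].
        destruct (Hsub 0%nat h) as [M0 HM0]. exists M0. intros i Hi _ m Hm.
        assert (i = 0)%nat by lia; subst; auto.
      - destruct IHJ as [MJ HMJ].
        destruct (le_dec (S J) j) as [h|h].
        + destruct (Hsub (S J) h) as [M1 HM1]. exists (Nat.max MJ M1).
          intros i Hi Hij m Hm. destruct (Nat.eq_dec i (S J)) as [->|Hne].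
          apply HM1; lia. apply HMJ; lia.
        + exists MJ. intros i Hi Hij m Hm. apply HMJ; lia. }
    destruct HA as [N1 HN1]. destruct (HB j) as [MB HMB].
    exists (1 + N1 + 2 * (j+2) + MB)%nat. split; [lia|].
    intros m Hm. split.
    - specialize (HN1 m ltac:(lia)). nia.
    - intros i Hi. apply HMB; auto; lia. }
  assert (HMf : exists Mf : nat -> nat, forall j, (1 <= Mf j)%nat /\ forall m, (Mf j <= m)%nat ->
             ((length (u (s j) m) + 1) * (j+2) <= m+1)%nat /\
             forall i, (i <= j)%nat -> In (e i) (u (s j) m)).
  { exists (fun j => proj1_sig (constructive_indefinite_description _ (HM j))).
    intro j; exact (proj2_sig (constructive_indefinite_description _ (HM j))). }
  destruct HMf as [Mf HMf].
  exists (s, Kf (Nf Mf)). simpl.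
  split; [|split; [|split; [|split; [|split]]]].
  - exact Hs_lt.
  - intros b Hb. destruct (Kf_unb (Nf Mf) (S (f b))) as [n Hn].
    destruct (Kf (Nf Mf) n) as [|j] eqn:E; [lia|].
    pose proof (Kf_inv (Nf Mf) n j E) as HN. pose proof (Nf_ge Mf j) as HNM.
    exists n, j. destruct (HMf j) as [H1 H2]. split; [lia|]. split; auto.
    rewrite Hg by auto. rewrite <- (He_f b Hb). apply (proj2 (H2 n ltac:(lia))). lia.
  - apply Kf_step.
  - intros n j E1 E2. pose proof (Kf_inc (Nf Mf) n j E2 E1) as HN.
    pose proof (Nf_ge Mf (S j)) as HNM.
    destruct (smax_in lt e j) as [i [Hi Ei]].
    rewrite Hg by auto. unfold s at 1. rewrite Ei.
    destruct (HMf (S j)) as [H1 H2]. apply (proj2 (H2 (S n) ltac:(lia))). lia.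
  - intros n j E. pose proof (Kf_inv (Nf Mf) n j E) as HN. pose proof (Nf_ge Mf j) as HNM.
    rewrite Hg by auto. destruct (HMf j) as [H1 H2]. apply (proj1 (H2 n ltac:(lia))).
  - apply Kf_unb.
Qed.

Theorem mainTheorem2 (T : Type) (lt : T -> T -> Prop) :
  is_omega1 T lt ->
  exists u : T -> nat -> list T,
    forall a : T,
      (forall n, (1 <= n)%nat -> NoDup (u a n)) /\
      (* (i) *)
      (forall n, (1 <= n)%nat -> (length (u a n) < n + 1)%nat) /\
      (* (ii) *)
      (forall n, (1 <= n)%nat ->
         In a (u a n) /\ (forall x, In x (u a n) -> In x (u a (S n)))) /\
      (* (iii) *)
      (forall b, (lt b a \/ b = a) <->
                 exists n, (1 <= n)%nat /\ In b (u a n)) /\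
      (* (iv) *)
      (forall n b, (1 <= n)%nat -> In b (u a n) ->
         forall x, In x (u b n) <-> (In x (u a n) /\ (lt x b \/ x = b))) /\
      (* (v) *)
      Un_cv (fun n => (INR (length (u a n)) / INR (n + 1))%R) 0%R.
Proof.
  intros [irr [tr [tri [wf [_ cnt]]]]].
  exists (U lt wf). intro a0.
  change (good lt (U lt wf) a0).
  induction a0 as [a IH] using (well_founded_ind wf).
  set (g := glue lt a (fun b _ => U lt wf b)).
  assert (Hg : forall b, lt b a -> g b = U lt wf b) by (intros; apply glue_lt; auto).
  pose proof (U_eq lt wf a) as Hua. fold g in Hua.
  destruct (classic (exists p : (nat -> T) * (nat -> nat), Spec lt g a (fst p) (snd p))) as [Hex|Hnex].
  - destruct (G_spec lt g a Hex) as [s [K [HS HG]]].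
    apply (step_spec lt irr tr (U lt wf) g a s K Hg IH HS).
    intro n. rewrite Hua, HG. destruct (K n); auto.
    rewrite Hg; [reflexivity| apply (proj1 HS)].
  - apply step_nospec; auto.
    + intros b Hb. apply Hnex. eapply exist_spec; eauto.
    + intro n. rewrite Hua. apply G_nospec; auto.
Qed.
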